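(* Let $U$ be a finite universe, let $\mathbf{B} = (\mathbf{B}_1, \mathbf{B}_2)$ be any Bloom filter, and fix $p \in (\tfrac12, 1)$. The Warner filter built from $\mathbf{B}$ — whose construction algorithm $\mathbf{B}_1'$, on input $S \subseteq U$, initializes $S' \gets \emptyset$, adds each $x \in S$ to $S'$ independently with probability $p$, adds each $x \in U \setminus S$ to $S'$ independently with probability $1-p$, and returns $\mathbf{B}_1(S')$ (the query algorithm $\mathbf{B}_2$ being unchanged) — satisfies $\left(\ln\frac{p}{1-p},\ 0\right)$-differential privacy, i.e. the randomized algorithm $\mathbf{B}_1'$ mapping sets to representations satisfies this differential privacy guarantee.
   Context: A Bloom filter is a pair $\mathbf{B}=(\mathbf{B}_1,\mathbf{B}_2)$ of probabilistic polynomial-time algorithms: $\mathbf{B}_1$ takes a set $S \subseteq U$ and returns a representation $M$; $\mathbf{B}_2$ takes a representation $M$ and an element $x \in U$ and outputs a bit. For sets $A,B$, let $d_{sj}(A,B) = |A \cup B| - |A \cap B|$. A randomized algorithm $\mathbf{A}_r$ taking subsets of $U$ as input satisfies $(\epsilon,\delta)$-differential privacy if for any two sets $S,S'$ with $d_{sj}(S,S') \le 1$ and any output range $O \subseteq \mathrm{Range}(\mathbf{A}_r)$, $\Pr[\mathbf{A}_r(S) \in O] \le e^{\epsilon}\Pr[\mathbf{A}_r(S') \in O] + \delta$, probabilities over the randomness of $\mathbf{A}_r$. *)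

(* Defs.v *)
From HB Require Import structures.
From mathcomp Require Import all_boot all_order all_algebra.
From mathcomp Require Import all_classical all_reals all_analysis.
Set Implicit Arguments. Unset Strict Implicit. Unset Printing Implicit Defensive.
Import Order.TTheory GRing.Theory Num.Theory.
Local Open Scope classical_set_scope.
Local Open Scope ring_scope.

Definition d_sj (U : finType) (A B : {set U}) : nat := (#|A :|: B| - #|A :&: B|)%N.

(* A randomized algorithm on subsets of U with outputs in a measurable space T
   is given by its output distribution: A S O = Pr[A(S) \in O]. *)
Definition differentially_private (U : finType) (d : measure_display)
  (T : measurableType d) (R : realType)
  (A : {set U} -> set T -> \bar R) (eps delta : R) : Prop :=
  forall S S' : {set U}, (d_sj S S' <= 1)%N ->
  forall O : set T, measurable O ->
    (A S O <= (expR eps)%:E * A S' O + delta%:E)%E.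

(* Probability that the Warner construction turns S into S':
   each x in S is kept with prob. p, each x not in S is added with prob. 1-p,
   independently. *)
Definition warner_weight (U : finType) (R : realType) (p : R) (S S' : {set U}) : R :=
  \prod_(x : U) (if x \in S' then (if x \in S then p else 1 - p)
                 else (if x \in S then 1 - p else p)).

(* Output distribution of B1' (S) = B1 (S'), S' drawn as above:
   Pr[B1'(S) \in O] = sum_{S'} Pr[S'] * Pr[B1(S') \in O]. *)
Definition warner_B1 (U : finType) (d : measure_display) (T : measurableType d)
  (R : realType) (B1 : {set U} -> probability T R) (p : R)
  (S : {set U}) (O : set T) : \bar R :=
  (\sum_(S' : {set U}) (warner_weight p S S')%:E * B1 S' O)%E.

(* Main.v *)
Require Import Defs.
From HB Require Import structures.
From mathcomp Require Import all_boot all_order all_algebra.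
From mathcomp Require Import all_classical all_reals all_analysis.
From mathcomp Require Import lra zify.
Import Order.TTheory GRing.Theory Num.Theory.
Local Open Scope ring_scope.

Lemma weight_le (U : finType) (R : realType) (p : R) (hp1 : 1 / 2 < p) (hp2 : p < 1)
  (S S' X : {set U}) : (d_sj S S' <= 1)%N ->
  warner_weight p S X <= p / (1 - p) * warner_weight p S' X.
Proof.
move=> hd.
set D := (S :|: S') :\: (S :&: S').
have hD : (#|D| <= 1)%N.
  rewrite /D cardsD; suff -> : (S :|: S') :&: (S :&: S') = S :&: S' by [].
  by apply/setP => x; rewrite !inE; case: (x \in S); case: (x \in S').
have q0 : 0 < 1 - p by rewrite subr_gt0.
have p0 : 0 < p by apply: lt_trans hp1; rewrite divr_gt0.
have c1 : 1 <= p / (1 - p).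
  by rewrite ler_pdivlMr // mul1r; lra.
set c := p / (1 - p).
pose f (A : {set U}) (x : U) := (if x \in X then (if x \in A then p else 1 - p)
                 else (if x \in A then 1 - p else p)).
have f0 A x : 0 <= f A x by rewrite /f; case: ifP; case: ifP => _ _; lra.
have fle x : f S x <= c * f S' x.
  have cq : c * (1 - p) = p by rewrite /c divfK // gt_eqF.
  have hpc : p <= c * p by rewrite ler_peMl // ltW.
  have hqc : 1 - p <= c * p by apply: le_trans hpc; lra.
  have hqq : 1 - p <= c * (1 - p) by rewrite ler_peMl // ltW.
  rewrite /f; case: ifP; case: (x \in S); case: (x \in S') => //= _; lra.
have feq x : x \notin D -> f S x = f S' x.
  rewrite /D !inE /f.
  by case: (x \in S); case: (x \in S').
rewrite /warner_weight -/(f S) -/(f S').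
change (\prod_x f S x <= c * \prod_x f S' x).
rewrite (bigID (fun x => x \in D)) /= [X in _ <= c * X](bigID (fun x => x \in D)) /=.
rewrite (eq_bigr (f S') (fun x hx => feq x hx)).
rewrite mulrA ler_wpM2r //; first by apply: prodr_ge0.
apply: (le_trans (y := \prod_(x in D) (c * f S' x))).
  by apply: ler_prod => x _; rewrite f0 fle.
rewrite big_split /=.
idtac "A".
rewrite prodr_const.
idtac "B".
apply: ler_wpM2r; first by apply: prodr_ge0.
idtac "C".
have [->|hD1] := eqVneq #|D| 0%N; first by rewrite expr0.
have -> : #|D| = 1%N by lia.
by rewrite expr1.
Qed.

Theorem mainTheorem3 (U : finType) (d : measure_display) (T : measurableType d)
  (R : realType) (B1 : {set U} -> probability T R) (B2 : T -> U -> bool)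
  (p : R) (hp1 : 1 / 2 < p) (hp2 : p < 1) :
  differentially_private (warner_B1 B1 p) (ln (p / (1 - p))) 0.
Proof.
move=> S S' hd O mO.
have q0 : 0 < 1 - p by rewrite subr_gt0.
have p0 : 0 < p by apply: lt_trans hp1; rewrite divr_gt0.
rewrite lnK; last by rewrite posrE divr_gt0.
rewrite adde0 /warner_B1 ge0_sume_distrr; last first.
  move=> X _; apply: mule_ge0 => //.
  rewrite lee_fin /warner_weight; apply: prodr_ge0 => x _.
  by case: ifP; case: ifP => _ _; lra.
apply: lee_sum => X _.
rewrite muleA -EFinM lee_wpmul2r // lee_fin.
exact: weight_le.
Qed.
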